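(* The variety $\mathcal{WHB}$ of WHB-algebras has the Maehara interpolation property: for any set of variables $Y$, whenever $\Sigma\cup\Gamma\cup\{\varepsilon\}\subseteq Eq(Y)$ with $Var(\Sigma)\cap Var(\Gamma\cup\{\varepsilon\})\neq\emptyset$ and $\Sigma\cup\Gamma\models_{\mathcal{WHB}}\varepsilon$, there exists $\Delta\subseteq Eq(Y)$ such that $\Sigma\models_{\mathcal{WHB}}\Delta$, $\Delta\cup\Gamma\models_{\mathcal{WHB}}\varepsilon$, and $Var(\Delta)\subseteq Var(\Sigma)\cap Var(\Gamma\cup\{\varepsilon\})$.
   Context: A WHB-algebra is an algebra $(A,\wedge,\vee,\to,\leftarrow,0,1)$ such that $(A,\wedge,\vee,0,1)$ is a bounded distributive lattice and for all $a,b,c\in A$: $a\to a=1$; $a\to(b\wedge c)=(a\to b)\wedge(a\to c)$; $(a\vee b)\to c=(a\to c)\wedge(b\to c)$; $(a\to b)\wedge(b\to c)\le a\to c$; $a\leftarrow a=0$; $(a\vee b)\leftarrow c=(a\leftarrow c)\vee(b\leftarrow c)$; $a\leftarrow(b\wedge c)=(a\leftarrow b)\vee(a\leftarrow c)$; $a\leftarrow c\le(a\leftarrow b)\vee(b\leftarrow c)$; $a\wedge((a\to b)\leftarrow 0)\le b$; $a\le b\vee(1\to(a\leftarrow b))$. $Eq(Y)$ denotes the set of equations between terms in the language $\{\wedge,\vee,\to,\leftarrow,0,1\}$ over variables from $Y$; $Var(\Phi)$ is the set of variables occurring in a set of equations $\Phi$; $\Phi\models_{\mathcal{WHB}}\Psi$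 means every assignment in every WHB-algebra satisfying all equations of $\Phi$ satisfies all equations of $\Psi$. *)

(* Defs.v *)
Set Implicit Arguments.

Record WHB := {
  car :> Type;
  meet : car -> car -> car;
  join : car -> car -> car;
  imp : car -> car -> car;
  coimp : car -> car -> car;
  zero : car;
  one : car;
  meetA : forall a b c, meet a (meet b c) = meet (meet a b) c;
  joinA : forall a b c, join a (join b c) = join (join a b) c;
  meetC : forall a b, meet a b = meet b a;
  joinC : forall a b, join a b = join b a;
  meet_absorb : forall a b, meet a (join a b) = a;
  join_absorb : forall a b, join a (meet a b) = a;
  meet_join_distr : forall a b c, meet a (join b c) = join (meet a b) (meet a c);
  meet0 : forall a, meet a zero = zero;
  join1 : forall a, join a one = one;
  (* WHB axioms; x <= y is defined as meet x y = x *)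
  imp_refl : forall a, imp a a = one;
  imp_meet : forall a b c, imp a (meet b c) = meet (imp a b) (imp a c);
  imp_join : forall a b c, imp (join a b) c = meet (imp a c) (imp b c);
  imp_trans : forall a b c,
      meet (meet (imp a b) (imp b c)) (imp a c) = meet (imp a b) (imp b c);
  coimp_refl : forall a, coimp a a = zero;
  coimp_join : forall a b c, coimp (join a b) c = join (coimp a c) (coimp b c);
  coimp_meet : forall a b c, coimp a (meet b c) = join (coimp a b) (coimp a c);
  coimp_trans : forall a b c,
      meet (coimp a c) (join (coimp a b) (coimp b c)) = coimp a c;
  ax_mp : forall a b, meet (meet a (coimp (imp a b) zero)) b = meet a (coimp (imp a b) zero);
  ax_dmp : forall a b, meet a (join b (imp one (coimp a b))) = a
}.

Inductive term (Y : Type) : Type :=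
| tvar : Y -> term Y
| tmeet : term Y -> term Y -> term Y
| tjoin : term Y -> term Y -> term Y
| timp : term Y -> term Y -> term Y
| tcoimp : term Y -> term Y -> term Y
| tzero : term Y
| tone : term Y.
Arguments tzero {Y}.
Arguments tone {Y}.

Definition eqn (Y : Type) : Type := (term Y * term Y)%type.

Fixpoint eval {Y : Type} (A : WHB) (v : Y -> A) (t : term Y) : A :=
  match t with
  | tvar y => v y
  | tmeet t1 t2 => meet A (eval A v t1) (eval A v t2)
  | tjoin t1 t2 => join A (eval A v t1) (eval A v t2)
  | timp t1 t2 => imp A (eval A v t1) (eval A v t2)
  | tcoimp t1 t2 => coimp A (eval A v t1) (eval A v t2)
  | tzero => zero A
  | tone => one A
  end.

Definition sat {Y : Type} (A : WHB) (v : Y -> A) (e : eqn Y) : Prop :=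
  eval A v (fst e) = eval A v (snd e).

Definition entails (Y : Type) (Phi Psi : eqn Y -> Prop) : Prop :=
  forall (A : WHB) (v : Y -> A),
    (forall e, Phi e -> sat A v e) -> forall e, Psi e -> sat A v e.

Fixpoint occurs (Y : Type) (y : Y) (t : term Y) : Prop :=
  match t with
  | tvar x => x = y
  | tmeet t1 t2 | tjoin t1 t2 | timp t1 t2 | tcoimp t1 t2 =>
      occurs y t1 \/ occurs y t2
  | tzero | tone => False
  end.

Definition Var (Y : Type) (Phi : eqn Y -> Prop) (y : Y) : Prop :=
  exists e, Phi e /\ (occurs y (fst e) \/ occurs y (snd e)).

Definition setU (Y : Type) (P Q : eqn Y -> Prop) : eqn Y -> Prop :=
  fun e => P e \/ Q e.

Definition set1 (Y : Type) (e0 : eqn Y) : eqn Y -> Prop := fun e => e = e0.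

(* Main.v *)
From Stdlib Require Import Classical FunctionalExtensionality PropExtensionality ProofIrrelevance ClassicalEpsilon.
Require Import Defs.
From mathcomp Require boolp classical_sets.
Module ZornW.
Import boolp classical_sets.
Lemma my_zorn (T:Type) (P : (T->Prop)->Prop) :
  (forall F : (T->Prop)->Prop, (forall X, F X -> P X) ->
     (forall X Y, F X -> F Y -> (forall x, X x -> Y x) \/ (forall x, Y x -> X x)) ->
     P (fun x => exists X, F X /\ X x)) ->
  exists A, P A /\ forall B, P B -> (forall x, A x -> B x) -> forall x, B x -> A x.
Proof.
intros H.
assert (HZ : exists A, P A /\ forall B, (A `<` B)%classic -> ~ P B).
{ apply Zorn_bigcup. intros F FP Ftot.
  specialize (H F FP Ftot).
  assert (E : (fun x => exists X, F X /\ X x) = (\bigcup_(X in F) X)%classic).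
  { apply funext; intro x; apply propext; split.
    - intros [X [FX Xx]]; exists X; assumption.
    - intros [X FX Xx]; exists X; split; assumption. }
  rewrite <- E; exact H. }
destruct HZ as [A [PA Amax]].
exists A; split; [exact PA|].
intros B PB AB x Bx.
apply NNPP; intro nAx.
apply (Amax B); [|exact PB].
split; [exact AB|].
intro BA; apply nAx; exact (BA x Bx).
Qed.
End ZornW.

Record DL := {
  dc :> Type;
  dm : dc -> dc -> dc;
  dj : dc -> dc -> dc;
  d0 : dc;
  d1 : dc;
  dmA : forall a b c, dm a (dm b c) = dm (dm a b) c;
  djA : forall a b c, dj a (dj b c) = dj (dj a b) c;
  dmC : forall a b, dm a b = dm b a;
  djC : forall a b, dj a b = dj b a;
  dm_abs : forall a b, dm a (dj a b) = a;
  dj_abs : forall a b, dj a (dm a b) = a;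
  d_distr : forall a b c, dm a (dj b c) = dj (dm a b) (dm a c);
  dm0 : forall a, dm a d0 = d0;
  dj1 : forall a, dj a d1 = d1
}.

Definition toDL (A : WHB) : DL :=
  Build_DL A (meet A) (join A) (zero A) (one A) (meetA A) (joinA A) (meetC A) (joinC A)
    (meet_absorb A) (join_absorb A) (meet_join_distr A) (meet0 A) (join1 A).

Section DLth.
Variable D : DL.
Definition le (x y : D) := dm D x y = x.

Lemma dm_idem x : dm D x x = x.
Proof. rewrite <- (dj_abs D x x) at 2. apply dm_abs. Qed.
Lemma dj_idem x : dj D x x = x.
Proof. rewrite <- (dm_abs D x x) at 2. apply dj_abs. Qed.
Lemma le_join x y : le x y <-> dj D x y = y.
Proof. unfold le; split; intro H.
- rewrite <- H, djC, dmC. apply dj_abs.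
- rewrite <- H. apply dm_abs. Qed.
Lemma le_refl x : le x x. Proof. apply dm_idem. Qed.
Lemma le_trans x y z : le x y -> le y z -> le x z.
Proof. unfold le; intros H1 H2. rewrite <- H1, <- dmA, H2. reflexivity. Qed.
Lemma le_anti x y : le x y -> le y x -> x = y.
Proof. unfold le; intros H1 H2. rewrite <- H1, dmC. exact H2. Qed.
Lemma le_ml x y : le (dm D x y) x.
Proof. unfold le. rewrite (dmC D (dm D x y) x), dmA, dm_idem. reflexivity. Qed.
Lemma le_mr x y : le (dm D x y) y.
Proof. unfold le. rewrite <- dmA, dm_idem. reflexivity. Qed.
Lemma le_glb x y z : le z x -> le z y -> le z (dm D x y).
Proof. unfold le; intros H1 H2. rewrite dmA, H1, H2. reflexivity. Qed.
Lemma le_jl x y : le x (dj D x y).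
Proof. apply dm_abs. Qed.
Lemma le_jr x y : le y (dj D x y).
Proof. rewrite djC. apply dm_abs. Qed.
Lemma le_lub x y z : le x z -> le y z -> le (dj D x y) z.
Proof. intros H1 H2. apply le_join in H1. apply le_join in H2. apply le_join. rewrite <- djA, H2, H1. reflexivity. Qed.
Lemma le0 x : le (d0 D) x.
Proof. unfold le. rewrite dmC. apply dm0. Qed.
Lemma le1 x : le x (d1 D).
Proof. apply le_join. apply dj1. Qed.
Lemma dj_distr a b c : dj D a (dm D b c) = dm D (dj D a b) (dj D a c).
Proof.
  rewrite (d_distr D (dj D a b) a c).
  rewrite (dmC D (dj D a b) a), dm_abs.
  rewrite (dmC D (dj D a b) c), d_distr.
  rewrite (djA D a (dm D c a) (dm D c b)).
  rewrite (dmC D c a), dj_abs. rewrite (dmC D c b). reflexivity.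
Qed.
Lemma le_mono_m x y x' y' : le x x' -> le y y' -> le (dm D x y) (dm D x' y').
Proof. intros; apply le_glb; [eapply le_trans; [apply le_ml|eauto]|eapply le_trans; [apply le_mr|eauto]]. Qed.
Lemma le_mono_j x y x' y' : le x x' -> le y y' -> le (dj D x y) (dj D x' y').
Proof. intros; apply le_lub; [eapply le_trans; [eauto|apply le_jl]|eapply le_trans; [eauto|apply le_jr]]. Qed.
End DLth.

Definition dualDL (D : DL) : DL :=
  Build_DL D (dj D) (dm D) (d1 D) (d0 D) (djA D) (dmA D) (djC D) (dmC D)
    (dj_abs D) (dm_abs D) (dj_distr D) (dj1 D) (dm0 D).

Lemma le_dual (D : DL) (x y : D) : @le (dualDL D) x y <-> le D y x.
Proof. rewrite (le_join D y x). unfold le; simpl. rewrite djC. tauto. Qed.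

Record pf (D : DL) (G : D -> Prop) : Prop := {
  pf1 : G (d1 D);
  pf0 : ~ G (d0 D);
  pfup : forall x y, le D x y -> G x -> G y;
  pfm : forall x y, G x -> G y -> G (dm D x y);
  pfj : forall x y, G (dj D x y) -> G x \/ G y
}.

Section Ext.
Variable D : DL.
Variable ok : D -> D -> Prop.
Hypothesis o1 : forall x y, le D x y -> ok x y.
Hypothesis o2 : forall x y z, ok x y -> ok y z -> ok x z.
Hypothesis o3 : forall x y y', ok x y -> ok x y' -> ok x (dm D y y').
Hypothesis o5 : forall x x' z, ok x z -> ok x' z -> ok (dj D x x') z.
Variables G0 I : D -> Prop.
Hypothesis g0 : exists g, G0 g.
Hypothesis G0m : forall x y, G0 x -> G0 y -> G0 (dm D x y).
Hypothesis G0ok : forall x y, G0 x -> ok x y -> G0 y.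
Hypothesis i0 : exists i, I i.
Hypothesis Idown : forall x y, le D x y -> I y -> I x.
Hypothesis Ij : forall x y, I x -> I y -> I (dj D x y).
Hypothesis disj : forall x, G0 x -> I x -> False.

Definition goodF (G : D -> Prop) :=
  (forall x, G0 x -> G x) /\ (forall x y, G x -> G y -> G (dm D x y)) /\
  (forall x y, G x -> ok x y -> G y) /\ (forall x, G x -> I x -> False).

Lemma ext_lemma : exists G, pf D G /\ (forall x, G0 x -> G x) /\
  (forall x, G x -> I x -> False) /\ (forall x y, G x -> ok x y -> G y).
Proof.
  destruct (ZornW.my_zorn D (fun G : D -> Prop => goodF (fun x => G0 x \/ G x))) as [A [PA Amax]].
  - intros F FP Ftot. unfold goodF. split; [|split; [|split]].
    + intros x Hx; left; exact Hx.
    + intros x y Hx Hy.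
      destruct Hx as [Hx|[X [FX Xx]]]; destruct Hy as [Hy|[Y [FY Yy]]].
      * left; auto.
      * destruct (FP Y FY) as [_ [Hm _]].
        destruct (Hm x y (or_introl Hx) (or_intror Yy)) as [h|h]; [left; exact h| right; exists Y; auto].
      * destruct (FP X FX) as [_ [Hm _]].
        destruct (Hm x y (or_intror Xx) (or_introl Hy)) as [h|h]; [left; exact h| right; exists X; auto].
      * destruct (Ftot X Y FX FY) as [XY|YX].
        -- destruct (FP Y FY) as [_ [Hm _]].
           destruct (Hm x y (or_intror (XY x Xx)) (or_intror Yy)) as [h|h]; [left; exact h| right; exists Y; auto].
        -- destruct (FP X FX) as [_ [Hm _]].
           destruct (Hm x y (or_intror Xx) (or_intror (YX y Yy))) as [h|h]; [left; exact h| right; exists X; auto].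
    + intros x y Hx Hok. destruct Hx as [Hx|[X [FX Xx]]].
      * left; eauto.
      * destruct (FP X FX) as [_ [_ [Hk _]]].
        destruct (Hk x y (or_intror Xx) Hok) as [h|h]; [left; exact h| right; exists X; auto].
    + intros x Hx Ix. destruct Hx as [Hx|[X [FX Xx]]]; [eauto|].
      destruct (FP X FX) as [_ [_ [_ Hd]]]. eapply Hd; [right; exact Xx| exact Ix].
  - set (G := fun x => G0 x \/ A x) in *.
    destruct PA as [GG0 [Gm [Gok Gd]]].
    assert (Gne : exists g, G g) by (destruct g0 as [g Hg]; exists g; left; exact Hg).
    assert (Gup : forall x y, le D x y -> G x -> G y) by eauto.
    assert (key : forall c, ~ G c -> exists g z, G g /\ I z /\ ok (dm D g c) z).
    { intros c nc. apply NNPP; intro Hn.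
      set (H := fun z => exists g, G g /\ ok (dm D g c) z).
      assert (gH : goodF (fun x => G0 x \/ H x)).
      { split; [|split; [|split]].
        - intros x Hx; left; exact Hx.
        - assert (HH : forall x, G0 x \/ H x -> H x).
          { intros x [Hx|Hx]; [|exact Hx]. exists x. split; [left; exact Hx|].
            apply o1. apply le_ml. }
          intros x y Hx Hy. right. destruct (HH x Hx) as [g [Gg Hg]]. destruct (HH y Hy) as [g' [Gg' Hg']].
          exists (dm D g g'). split; [apply Gm; auto|].
          apply o3.
          + eapply o2; [|exact Hg]. apply o1. apply le_mono_m; [apply le_ml|apply le_refl].
          + eapply o2; [|exact Hg']. apply o1. apply le_mono_m; [apply le_mr|apply le_refl].
        - intros x y [Hx|[g [Gg Hg]]] Hok.
          + left; eauto.
          + right. exists g. split; [exact Gg|]. eauto.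
        - intros x [Hx|[g [Gg Hg]]] Ix.
          + eauto.
          + apply Hn. exists g, x. auto. }
      assert (sub : forall x, A x -> H x).
      { intros x Ax. exists x. split; [right; exact Ax|]. apply o1; apply le_ml. }
      pose proof (Amax H gH sub) as HA.
      apply nc. right. apply HA.
      destruct Gne as [g Gg]. exists g. split; [exact Gg|]. apply o1; apply le_mr. }
    exists G. split; [|split; [|split]].
    + constructor.
      * destruct Gne as [g Gg]. eapply Gup; [apply le1|exact Gg].
      * intro G0'. destruct i0 as [i Ii]. eapply Gd; [exact G0'|]. eapply Idown; [apply le0|exact Ii].
      * exact Gup.
      * exact Gm.
      * intros c d Hcd. apply NNPP; intro Hn.
        assert (nc : ~ G c) by tauto. assert (nd : ~ G d) by tauto.
        destruct (key c nc) as [g [z [Gg [Iz okz]]]].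
        destruct (key d nd) as [g' [z' [Gg' [Iz' okz']]]].
        set (h := dm D g g'). set (i := dj D z z').
        assert (ok (dm D h c) i).
        { eapply o2; [|eapply o2; [exact okz|]]; apply o1.
          - apply le_mono_m; [apply le_ml|apply le_refl].
          - apply le_jl. }
        assert (ok (dm D h d) i).
        { eapply o2; [|eapply o2; [exact okz'|]]; apply o1.
          - apply le_mono_m; [apply le_mr|apply le_refl].
          - apply le_jr. }
        assert (ok (dm D h (dj D c d)) i).
        { rewrite d_distr. apply o5; assumption. }
        apply (Gd i); [|apply Ij; assumption].
        eapply Gok; [|eassumption]. apply Gm; [apply Gm; assumption|exact Hcd].
    + exact GG0.
    + exact Gd.
    + exact Gok.
Qed.
End Ext.

Section WHBth.
Variable A : WHB.
Notation L := (toDL A).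
Notation leA := (le L).
Notation pfA := (pf L).

Lemma imp_anti1 a a' b : leA a a' -> leA (imp A a' b) (imp A a b).
Proof. intro H. apply le_join in H. simpl in H.
  assert (E: imp A a' b = meet A (imp A a b) (imp A a' b)) by (rewrite <- imp_join, H; reflexivity).
  rewrite E. apply (le_ml L). Qed.
Lemma imp_mono2 a b b' : leA b b' -> leA (imp A a b) (imp A a b').
Proof. intro H. unfold le in H; simpl in H.
  assert (E: imp A a b = meet A (imp A a b) (imp A a b')) by (rewrite <- imp_meet, H; reflexivity).
  rewrite E. apply (le_mr L). Qed.
Lemma imp_le1 a b : leA a b -> imp A a b = one A.
Proof. intro H. apply (le_anti L). apply (le1 L).
  eapply (le_trans L); [|apply imp_anti1; exact H]. rewrite imp_refl. apply (le_refl L). Qed.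
Lemma imp_tr a b c : leA (meet A (imp A a b) (imp A b c)) (imp A a c).
Proof. unfold le; simpl. apply imp_trans. Qed.
Lemma coimp_mono1 a a' b : leA a a' -> leA (coimp A a b) (coimp A a' b).
Proof. intro H. apply le_join in H. simpl in H.
  assert (E: coimp A a' b = join A (coimp A a b) (coimp A a' b)) by (rewrite <- coimp_join, H; reflexivity).
  rewrite E. apply (le_jl L). Qed.
Lemma coimp_anti2 a b b' : leA b b' -> leA (coimp A a b') (coimp A a b).
Proof. intro H. unfold le in H; simpl in H.
  assert (E: coimp A a b = join A (coimp A a b) (coimp A a b')) by (rewrite <- coimp_meet, H; reflexivity).
  rewrite E. apply (le_jr L). Qed.
Lemma coimp_le0 a b : leA a b -> coimp A a b = zero A.
Proof. intro H. apply (le_anti L); [|apply (le0 L)].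
  eapply (le_trans L); [apply coimp_mono1; exact H|]. rewrite coimp_refl. apply (le_refl L). Qed.
Lemma coimp_tr a b c : leA (coimp A a c) (join A (coimp A a b) (coimp A b c)).
Proof. unfold le; simpl. apply coimp_trans. Qed.
Lemma mp_le a b : leA (meet A a (coimp A (imp A a b) (zero A))) b.
Proof. unfold le; simpl. apply ax_mp. Qed.
Lemma dmp_le a b : leA a (join A b (imp A (one A) (coimp A a b))).
Proof. unfold le; simpl. apply ax_dmp. Qed.

Lemma pf_meet G x y : pfA G -> (G (meet A x y) <-> G x /\ G y).
Proof. intro P; split.
  - intro H; split; eapply (pfup _ _ P); [apply (le_ml L)| exact H|apply (le_mr L)|exact H].
  - intros [H1 H2]; apply (pfm _ _ P); assumption. Qed.
Lemma pf_join G x y : pfA G -> (G (join A x y) <-> G x \/ G y).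
Proof. intro P; split.
  - apply (pfj _ _ P).
  - intros [H|H]; eapply (pfup _ _ P); [apply (le_jl L)|exact H|apply (le_jr L)|exact H]. Qed.

Definition Rr (F G : A -> Prop) := forall x y, F (imp A x y) -> G x -> G y.
Definition Ss (F G : A -> Prop) := forall x y, F x -> ~ F y -> G (coimp A x y).

Lemma S_R F G : pfA F -> pfA G -> Ss F G -> Rr F G.
Proof. intros PF PG H x y Fxy Gx.
  assert (G (coimp A (imp A x y) (zero A))) by (apply H; [exact Fxy| apply (pf0 _ _ PF)]).
  eapply (pfup _ _ PG); [apply (mp_le x y)|]. apply (pfm _ _ PG); assumption. Qed.
Lemma R_S F G : pfA F -> pfA G -> Rr F G -> Ss F G.
Proof. intros PF PG H x y Fx nFy.
  assert (Fj : F (join A y (imp A (one A) (coimp A x y)))) by (eapply (pfup _ _ PF); [apply dmp_le|exact Fx]).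
  apply (pfj _ _ PF) in Fj. destruct Fj as [Fy|Fi]; [contradiction|].
  eapply H; [exact Fi|apply (pf1 _ _ PG)]. Qed.

Lemma fwd_ext (F G0 I : A -> Prop) :
  pfA F ->
  (exists g, G0 g) -> (forall x y, G0 x -> G0 y -> G0 (meet A x y)) ->
  (forall x y, G0 x -> F (imp A x y) -> G0 y) ->
  (exists i, I i) -> (forall x y, leA x y -> I y -> I x) ->
  (forall x y, I x -> I y -> I (join A x y)) ->
  (forall x, G0 x -> I x -> False) ->
  exists G, pfA G /\ (forall x, G0 x -> G x) /\ (forall x, G x -> I x -> False) /\ Rr F G.
Proof.
  intros PF g0 G0m G0ok i0 Id Ij dj.
  destruct (ext_lemma L (fun x y => F (imp A x y))) with (G0 := G0) (I := I)
    as [G [PG [H1 [H2 H3]]]]; auto.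
  - intros x y H. rewrite (imp_le1 _ _ H). apply (pf1 _ _ PF).
  - intros x y z H1 H2. eapply (pfup _ _ PF); [apply imp_tr|]. apply (pfm _ _ PF); eauto.
  - intros x y y' H1 H2. simpl. rewrite imp_meet. apply (pfm _ _ PF); auto.
  - intros x x' z H1 H2. simpl. rewrite imp_join. apply (pfm _ _ PF); auto.
  - exists G. split; [exact PG|split; [exact H1|split; [exact H2|]]].
    intros x y Fxy Gx. eapply H3; eauto.
Qed.

Lemma pft (G0 I : A -> Prop) :
  (exists g, G0 g) -> (forall x y, G0 x -> G0 y -> G0 (meet A x y)) ->
  (forall x y, G0 x -> leA x y -> G0 y) ->
  (exists i, I i) -> (forall x y, leA x y -> I y -> I x) ->
  (forall x y, I x -> I y -> I (join A x y)) ->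
  (forall x, G0 x -> I x -> False) ->
  exists G, pfA G /\ (forall x, G0 x -> G x) /\ (forall x, G x -> I x -> False).
Proof.
  intros g0 G0m G0ok i0 Id Ij dj.
  destruct (ext_lemma L (leA)) with (G0 := G0) (I := I)
    as [G [PG [H1 [H2 H3]]]]; auto.
  - intros x y z; apply (le_trans L).
  - intros; apply (le_glb L); auto.
  - intros; apply (le_lub L); auto.
  - exists G; auto.
Qed.

Lemma bwd_ext (G J0 F0 : A -> Prop) :
  pfA G ->
  (exists j, J0 j) -> (forall x y, J0 x -> J0 y -> J0 (join A x y)) ->
  (forall x y, J0 x -> ~ G (coimp A y x) -> J0 y) ->
  (exists f, F0 f) -> (forall x y, leA x y -> F0 x -> F0 y) ->
  (forall x y, F0 x -> F0 y -> F0 (meet A x y)) ->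
  (forall x, J0 x -> F0 x -> False) ->
  exists F, pfA F /\ (forall x, F0 x -> F x) /\ (forall x, F x -> J0 x -> False) /\ Rr F G.
Proof.
  intros PG j0 J0j J0ok f0 Fu Fm dj.
  destruct (ext_lemma (dualDL L) (fun x y => ~ G (coimp A y x))) with (G0 := J0) (I := F0)
    as [J [PJ [H1 [H2 H3]]]]; auto.
  - intros x y H. apply le_dual in H. rewrite (coimp_le0 _ _ H). apply (pf0 _ _ PG).
  - intros x y z H1 H2 H3. pose proof (pfup _ _ PG _ _ (coimp_tr z y x) H3) as H4.
    apply (pfj _ _ PG) in H4. tauto.
  - intros x y y' H1 H2 H3. simpl in H3. rewrite coimp_join in H3.
    apply (pfj _ _ PG) in H3. tauto.
  - intros x x' z H1 H2 H3. simpl in H3. rewrite coimp_meet in H3.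
    apply (pfj _ _ PG) in H3. tauto.
  - intros x y H Fy. apply (Fu y x); [apply le_dual; exact H|exact Fy].
  - exists (fun x => ~ J x).
    assert (PF : pfA (fun x => ~ J x)).
    { constructor.
      - exact (pf0 _ _ PJ).
      - intro H. apply H. exact (pf1 _ _ PJ).
      - intros x y H nJx Jy. apply nJx. eapply (pfup _ _ PJ); [|exact Jy]. apply le_dual. exact H.
      - intros x y nJx nJy Jm. apply (pfj _ _ PJ) in Jm. tauto.
      - intros x y nJ. apply NNPP. intro H. apply nJ. apply (pfm _ _ PJ); apply NNPP; tauto. }
    split; [exact PF|split; [|split]].
    + intros x Fx Jx. eauto.
    + intros x nJx Jx. exact (nJx (H1 x Jx)).
    + apply S_R; [exact PF|exact PG|].
      intros x y nJx nnJy. apply NNPP. intro nG. apply nJx. eapply H3; [|exact nG].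
      apply NNPP; exact nnJy.
Qed.

Lemma imp_truth F a b : pfA F -> ~ F (imp A a b) ->
  exists G, pfA G /\ Rr F G /\ G a /\ ~ G b.
Proof.
  intros PF nF.
  destruct (fwd_ext F (fun z => F (imp A a z)) (fun z => leA z b)) as [G [PG [H1 [H2 H3]]]]; auto.
  - exists a. rewrite imp_refl. apply (pf1 _ _ PF).
  - intros x y Hx Hy. rewrite imp_meet. apply (pfm _ _ PF); auto.
  - intros x y Hx Hy. eapply (pfup _ _ PF); [apply imp_tr|]. apply (pfm _ _ PF); eauto.
  - exists b; apply (le_refl L).
  - intros x y H1 H2; eapply (le_trans L); eauto.
  - intros; apply (le_lub L); auto.
  - intros x Hx Hb. apply nF. eapply (pfup _ _ PF); [apply imp_mono2; exact Hb|exact Hx].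
  - exists G. split; [exact PG|split; [exact H3|split]].
    + apply H1. rewrite imp_refl. apply (pf1 _ _ PF).
    + intro Gb. eapply H2; [exact Gb|apply (le_refl L)].
Qed.

Lemma coimp_truth G a b : pfA G -> G (coimp A a b) ->
  exists F, pfA F /\ Rr F G /\ F a /\ ~ F b.
Proof.
  intros PG Gab.
  destruct (bwd_ext G (fun z => ~ G (coimp A z b)) (fun z => leA a z)) as [F [PF [H1 [H2 H3]]]]; auto.
  - exists b. rewrite coimp_refl. apply (pf0 _ _ PG).
  - intros x y Hx Hy H. rewrite coimp_join in H. apply (pfj _ _ PG) in H. tauto.
  - intros x y Hx Hy H. pose proof (pfup _ _ PG _ _ (coimp_tr y x b) H) as H4.
    apply (pfj _ _ PG) in H4. tauto.
  - exists a; apply (le_refl L).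
  - intros x y H1 H2; eapply (le_trans L); eauto.
  - intros; apply (le_glb L); auto.
  - intros x Hx Ha. apply Hx. eapply (pfup _ _ PG); [apply coimp_mono1; exact Ha|exact Gab].
  - exists F. split; [exact PF|split; [exact H3|split]].
    + apply H1. apply (le_refl L).
    + intro Fb. eapply H2; [exact Fb|]. rewrite coimp_refl. apply (pf0 _ _ PG).
Qed.
End WHBth.

Lemma sext (W : Type) (P Q : W -> Prop) : (forall w, P w <-> Q w) -> P = Q.
Proof. intro H. apply functional_extensionality. intro w. apply propositional_extensionality. apply H. Qed.

Section Frame.
Variable W : Type.
Variable R : W -> W -> Prop.
Definition fmeet (P Q : W -> Prop) := fun w => P w /\ Q w.
Definition fjoin (P Q : W -> Prop) := fun w => P w \/ Q w.
Definition fimp (P Q : W -> Prop) := fun w => forall w', R w w' -> P w' -> Q w'.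
Definition fcoimp (P Q : W -> Prop) := fun w => exists w', R w' w /\ P w' /\ ~ Q w'.
Definition fzero : W -> Prop := fun _ => False.
Definition fone : W -> Prop := fun _ => True.

Ltac fs := intros; apply sext; intro w; unfold fmeet, fjoin, fimp, fcoimp, fzero, fone.

Definition FA : WHB.
Proof.
  refine (@Build_WHB (W -> Prop) fmeet fjoin fimp fcoimp fzero fone _ _ _ _ _ _ _ _ _ _ _ _ _ _ _ _ _ _ _).
  all: fs.
  all: try (firstorder; fail).
  - (* coimp_meet *)
    split.
    + intros [w' [H1 [H2 H3]]]. apply not_and_or in H3. firstorder.
    + firstorder.
  - (* coimp_trans *)
    split.
    + firstorder.
    + intros [w' [H1 [H2 H3]]]. split; [exists w'; auto|].
      destruct (classic (b w')); [right|left]; exists w'; auto.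
  - (* ax_dmp *)
    split; [firstorder|]. intro Ha. split; [exact Ha|].
    destruct (classic (b w)); [left; exact H|right].
    intros w' Hw' _. exists w. auto.
Defined.
End Frame.

Section Transfer.
Variable Y : Type.
Variable Y0 : Y -> Prop.
Definition y0t (t : term Y) := forall y, occurs y t -> Y0 y.
Lemma y0_one : y0t tone. Proof. intros y H; destruct H. Qed.
Lemma y0_zero : y0t tzero. Proof. intros y H; destruct H. Qed.
Lemma y0_bin (f : term Y -> term Y -> term Y) t s :
  (forall y, occurs y (f t s) -> occurs y t \/ occurs y s) -> y0t t -> y0t s -> y0t (f t s).
Proof. intros Hf Ht Hs y Hy. destruct (Hf y Hy); auto. Qed.
Lemma y0_meet t s : y0t t -> y0t s -> y0t (tmeet t s). Proof. apply y0_bin; auto. Qed.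
Lemma y0_join t s : y0t t -> y0t s -> y0t (tjoin t s). Proof. apply y0_bin; auto. Qed.
Lemma y0_imp t s : y0t t -> y0t s -> y0t (timp t s). Proof. apply y0_bin; auto. Qed.
Lemma y0_coimp t s : y0t t -> y0t s -> y0t (tcoimp t s). Proof. apply y0_bin; auto. Qed.

Definition agree (B1 : WHB) (u1 : Y -> B1) (B2 : WHB) (u2 : Y -> B2) (X1 : B1 -> Prop) (X2 : B2 -> Prop) :=
  forall t, y0t t -> (X1 (eval B1 u1 t) <-> X2 (eval B2 u2 t)).

Lemma agree_sym B1 u1 B2 u2 X1 X2 : agree B1 u1 B2 u2 X1 X2 -> agree B2 u2 B1 u1 X2 X1.
Proof. intros H t Ht. symmetry. apply H; exact Ht. Qed.

Variables (B1 B2 : WHB) (u1 : Y -> B1) (u2 : Y -> B2).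
Notation ev1 := (eval B1 u1).
Notation ev2 := (eval B2 u2).
Notation le2 := (le (toDL B2)).

Lemma tr_fwd X1 X2 G : pf (toDL B1) X1 -> pf (toDL B2) X2 -> agree B1 u1 B2 u2 X1 X2 ->
  pf (toDL B1) G -> Rr B1 X1 G ->
  exists G', pf (toDL B2) G' /\ Rr B2 X2 G' /\ agree B1 u1 B2 u2 G G'.
Proof.
  intros P1 P2 Ag PG RG.
  destruct (fwd_ext B2 X2 (fun z => exists t, y0t t /\ G (ev1 t) /\ X2 (imp B2 (ev2 t) z))
                          (fun z => exists s, y0t s /\ ~ G (ev1 s) /\ le2 z (ev2 s)))
    as [G' [PG' [H1 [H2 H3]]]]; auto.
  - exists (one B2). exists tone. split; [apply y0_one|split; [apply (pf1 _ _ PG)|]].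
    simpl. rewrite imp_refl. apply (pf1 _ _ P2).
  - intros x y [t [Ht [Gt Xt]]] [t' [Ht' [Gt' Xt']]].
    exists (tmeet t t'). split; [apply y0_meet; auto|split].
    + simpl. apply (pfm _ _ PG); auto.
    + simpl. rewrite imp_meet. apply (pfm _ _ P2).
      * eapply (pfup _ _ P2); [apply imp_anti1; apply (le_ml (toDL B2))|exact Xt].
      * eapply (pfup _ _ P2); [apply imp_anti1; apply (le_mr (toDL B2))|exact Xt'].
  - intros x y [t [Ht [Gt Xt]]] Hxy. exists t. split; [exact Ht|split; [exact Gt|]].
    eapply (pfup _ _ P2); [apply imp_tr|]. apply (pfm _ _ P2); [exact Xt|exact Hxy].
  - exists (zero B2). exists tzero. split; [apply y0_zero|split; [apply (pf0 _ _ PG)|apply (le_refl (toDL B2))]].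
  - intros x y Hxy [s [Hs [Gs Hy]]]. exists s. split; [exact Hs|split; [exact Gs|]]. eapply (le_trans (toDL B2)); eauto.
  - intros x y [s [Hs [Gs Hx]]] [s' [Hs' [Gs' Hy]]]. exists (tjoin s s').
    split; [apply y0_join; auto|split].
    + simpl. intro Hj. apply (pfj _ _ PG) in Hj. tauto.
    + simpl. apply (le_mono_j (toDL B2)); auto.
  - intros x [t [Ht [Gt Xt]]] [s [Hs [Gs Hx]]].
    assert (X2 (ev2 (timp t s))).
    { simpl. eapply (pfup _ _ P2); [apply imp_mono2; exact Hx|exact Xt]. }
    apply Ag in H; [|apply y0_imp; auto]. simpl in H.
    apply Gs. eapply RG; eauto.
  - exists G'. split; [exact PG'|split; [exact H3|]].
    intros t Ht. split.
    + intro Gt. apply H1. exists t. split; [exact Ht|split; [exact Gt|]]. rewrite imp_refl. apply (pf1 _ _ P2).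
    + intro G't. apply NNPP. intro nGt. eapply H2; [exact G't|]. exists t. split; [exact Ht|split; [exact nGt|apply (le_refl (toDL B2))]].
Qed.

Lemma tr_bwd X1 X2 F : pf (toDL B1) X1 -> pf (toDL B2) X2 -> agree B1 u1 B2 u2 X1 X2 ->
  pf (toDL B1) F -> Rr B1 F X1 ->
  exists F', pf (toDL B2) F' /\ Rr B2 F' X2 /\ agree B1 u1 B2 u2 F F'.
Proof.
  intros P1 P2 Ag PF RF.
  destruct (bwd_ext B2 X2 (fun z => exists s, y0t s /\ ~ F (ev1 s) /\ ~ X2 (coimp B2 z (ev2 s)))
                          (fun z => exists t, y0t t /\ F (ev1 t) /\ le2 (ev2 t) z))
    as [F' [PF' [H1 [H2 H3]]]]; auto.
  - exists (zero B2). exists tzero. split; [apply y0_zero|split; [apply (pf0 _ _ PF)|]].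
    simpl. rewrite coimp_refl. apply (pf0 _ _ P2).
  - intros x y [s [Hs [Fs Xs]]] [s' [Hs' [Fs' Xs']]].
    exists (tjoin s s'). split; [apply y0_join; auto|split].
    + simpl. intro Hj. apply (pfj _ _ PF) in Hj. tauto.
    + simpl. rewrite coimp_join. intro Hj. apply (pfj _ _ P2) in Hj. destruct Hj as [Hj|Hj].
      * apply Xs. eapply (pfup _ _ P2); [apply coimp_anti2; apply (le_jl (toDL B2))|exact Hj].
      * apply Xs'. eapply (pfup _ _ P2); [apply coimp_anti2; apply (le_jr (toDL B2))|exact Hj].
  - intros x y [s [Hs [Fs Xs]]] nG. exists s. split; [exact Hs|split; [exact Fs|]].
    intro Hy. pose proof (pfup _ _ P2 _ _ (coimp_tr B2 y x (ev2 s)) Hy) as H4.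
    apply (pfj _ _ P2) in H4. tauto.
  - exists (one B2). exists tone. split; [apply y0_one|split; [apply (pf1 _ _ PF)|apply (le_refl (toDL B2))]].
  - intros x y Hxy [t [Ht [Ft Hx]]]. exists t. split; [exact Ht|split; [exact Ft|]]. eapply (le_trans (toDL B2)); eauto.
  - intros x y [t [Ht [Ft Hx]]] [t' [Ht' [Ft' Hy]]]. exists (tmeet t t').
    split; [apply y0_meet; auto|split].
    + simpl. apply (pfm _ _ PF); auto.
    + simpl. apply (le_mono_m (toDL B2)); auto.
  - intros x [s [Hs [Fs Xs]]] [t [Ht [Ft Hx]]].
    assert (X1 (ev1 (tcoimp t s))).
    { simpl. apply (R_S B1 F X1 PF P1 RF); assumption. }
    apply Ag in H; [|apply y0_coimp; auto]. simpl in H.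
    apply Xs. eapply (pfup _ _ P2); [apply coimp_mono1; exact Hx|exact H].
  - exists F'. split; [exact PF'|split; [exact H3|]].
    intros t Ht. split.
    + intro Ft. apply H1. exists t. split; [exact Ht|split; [exact Ft|apply (le_refl (toDL B2))]].
    + intro F't. apply NNPP. intro nFt. eapply H2; [exact F't|]. exists t. split; [exact Ht|split; [exact nFt|]].
      rewrite coimp_refl. apply (pf0 _ _ P2).
Qed.
End Transfer.

Section Quot.
Variable Y : Type.
Variable Sig : eqn Y -> Prop.
Definition eqv (t s : term Y) := forall (B : WHB) (u : Y -> B), (forall e, Sig e -> sat B u e) -> eval B u t = eval B u s.
Definition cls t := fun s => eqv t s.
Definition carL := {P : term Y -> Prop | exists t, P = cls t}.
Definition mkL (t : term Y) : carL := exist _ (cls t) (ex_intro _ t eq_refl).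

Lemma sig_ext (P Q : carL) : proj1_sig P = proj1_sig Q -> P = Q.
Proof. destruct P as [P HP], Q as [Q HQ]; simpl; intro E; subst. f_equal. apply proof_irrelevance. Qed.

Lemma mkL_eq t s : eqv t s -> mkL t = mkL s.
Proof. intro H. apply sig_ext. simpl. apply sext. intro r. unfold cls, eqv in *. split.
  - intros H' B u Hu. rewrite <- (H B u Hu). apply H'; auto.
  - intros H' B u Hu. rewrite (H B u Hu). apply H'; auto. Qed.
Lemma mkL_inv t s : mkL t = mkL s -> eqv t s.
Proof. intro H. apply (f_equal (@proj1_sig _ _)) in H. simpl in H.
  assert (E : cls s s) by (intros B u Hu; reflexivity).
  rewrite <- H in E. exact E. Qed.

Definition rep (P : carL) : term Y := proj1_sig (constructive_indefinite_description _ (proj2_sig P)).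
Lemma rep_spec P : mkL (rep P) = P.
Proof. apply sig_ext. simpl. unfold rep. destruct (constructive_indefinite_description _ _) as [t Ht]. simpl. symmetry; exact Ht. Qed.
Lemma allmk P : exists t, P = mkL t.
Proof. exists (rep P). symmetry; apply rep_spec. Qed.
Lemma rep_eqv t : eqv (rep (mkL t)) t.
Proof. apply mkL_inv. apply rep_spec. Qed.

Definition mL P Q := mkL (tmeet (rep P) (rep Q)).
Definition jL P Q := mkL (tjoin (rep P) (rep Q)).
Definition iL P Q := mkL (timp (rep P) (rep Q)).
Definition cL P Q := mkL (tcoimp (rep P) (rep Q)).
Definition zL := mkL tzero.
Definition oL := mkL tone.

Lemma mL_mk a b : mL (mkL a) (mkL b) = mkL (tmeet a b).
Proof. apply mkL_eq. intros B u Hu. simpl. rewrite (rep_eqv a B u Hu), (rep_eqv b B u Hu). reflexivity. Qed.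
Lemma jL_mk a b : jL (mkL a) (mkL b) = mkL (tjoin a b).
Proof. apply mkL_eq. intros B u Hu. simpl. rewrite (rep_eqv a B u Hu), (rep_eqv b B u Hu). reflexivity. Qed.
Lemma iL_mk a b : iL (mkL a) (mkL b) = mkL (timp a b).
Proof. apply mkL_eq. intros B u Hu. simpl. rewrite (rep_eqv a B u Hu), (rep_eqv b B u Hu). reflexivity. Qed.
Lemma cL_mk a b : cL (mkL a) (mkL b) = mkL (tcoimp a b).
Proof. apply mkL_eq. intros B u Hu. simpl. rewrite (rep_eqv a B u Hu), (rep_eqv b B u Hu). reflexivity. Qed.

Ltac qs := repeat match goal with
  | P : carL |- _ => let t := fresh "t" in destruct (allmk P) as [t ->]
  end;
  unfold zL, oL; repeat (first [rewrite mL_mk | rewrite jL_mk | rewrite iL_mk | rewrite cL_mk]);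
  apply mkL_eq; intros B u Hu; simpl.

Definition LQ : WHB.
Proof.
  refine (@Build_WHB carL mL jL iL cL zL oL _ _ _ _ _ _ _ _ _ _ _ _ _ _ _ _ _ _ _); intros; qs.
  - apply meetA.
  - apply joinA.
  - apply meetC.
  - apply joinC.
  - apply meet_absorb.
  - apply join_absorb.
  - apply meet_join_distr.
  - apply meet0.
  - apply join1.
  - apply imp_refl.
  - apply imp_meet.
  - apply imp_join.
  - apply imp_trans.
  - apply coimp_refl.
  - apply coimp_join.
  - apply coimp_meet.
  - apply coimp_trans.
  - apply ax_mp.
  - apply ax_dmp.
Defined.

Definition vL (y : Y) : LQ := mkL (tvar y).
Lemma evalL t : eval LQ vL t = mkL t.
Proof. induction t; simpl; try reflexivity.
  - rewrite IHt1, IHt2. apply mL_mk.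
  - rewrite IHt1, IHt2. apply jL_mk.
  - rewrite IHt1, IHt2. apply iL_mk.
  - rewrite IHt1, IHt2. apply cL_mk.
Qed.
End Quot.

Section Main.
Variables (Y : Type) (Sig Gam : eqn Y -> Prop) (eps : eqn Y) (A : WHB) (v : Y -> A).
Definition Y0 := fun y => Var Sig y /\ Var (setU Gam (set1 eps)) y.
Hypothesis HvD : forall t s, y0t Y Y0 t -> y0t Y Y0 s -> eqv Y Sig t s -> eval A v t = eval A v s.
Hypothesis HvG : forall e, Gam e -> sat A v e.
Hypothesis Hent : entails (setU Sig Gam) (set1 eps).

Notation LL := (LQ Y Sig).
Notation vLL := (vL Y Sig).

Record Pt := {
  px : LL -> Prop;
  pz : A -> Prop;
  ppx : pf (toDL LL) px;
  ppz : pf (toDL A) pz;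
  pag : agree Y Y0 LL vLL A v px pz
}.

Definition Rp (p q : Pt) := Rr LL (px p) (px q) /\ Rr A (pz p) (pz q).
Definition PA := FA Pt Rp.
Definition w (y : Y) : PA := fun p => (Var Sig y /\ px p (vLL y)) \/ (~ Var Sig y /\ pz p (v y)).

Lemma truth1 t : (forall y, occurs y t -> Var Sig y) -> eval PA w t = fun p => px p (eval LL vLL t).
Proof.
  induction t; intro Ht; simpl.
  - apply sext; intro p. split.
    + intros [[_ H]|[n _]]; [exact H|]. exfalso; apply n; apply Ht; reflexivity.
    + intro H; left; split; [apply Ht; reflexivity|exact H].
  - rewrite IHt1, IHt2 by (intros y Hy; apply Ht; simpl; auto).
    apply sext; intro p. simpl. unfold fmeet. symmetry. apply (pf_meet LL _ _ _ (ppx p)).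
  - rewrite IHt1, IHt2 by (intros y Hy; apply Ht; simpl; auto).
    apply sext; intro p. simpl. unfold fjoin. symmetry. apply (pf_join LL _ _ _ (ppx p)).
  - rewrite IHt1, IHt2 by (intros y Hy; apply Ht; simpl; auto).
    apply sext; intro p. simpl. unfold fimp. split.
    + intro H. apply NNPP; intro n.
      destruct (imp_truth LL (px p) _ _ (ppx p) n) as [G [PG [RG [Ga nGb]]]].
      destruct (tr_fwd Y Y0 LL A vLL v (px p) (pz p) G (ppx p) (ppz p) (pag p) PG RG) as [Z' [PZ [RZ AgZ]]].
      apply nGb. apply (H (Build_Pt G Z' PG PZ AgZ)); [split; assumption|exact Ga].
    + intros H q [R1 R2] Ha. exact (R1 _ _ H Ha).
  - rewrite IHt1, IHt2 by (intros y Hy; apply Ht; simpl; auto).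
    apply sext; intro p. simpl. unfold fcoimp. split.
    + intros [q [[R1 R2] [Ha nb]]]. apply (R_S LL (px q) (px p) (ppx q) (ppx p) R1); auto.
    + intro H. destruct (coimp_truth LL (px p) _ _ (ppx p) H) as [F [PF [RF [Fa nFb]]]].
      destruct (tr_bwd Y Y0 LL A vLL v (px p) (pz p) F (ppx p) (ppz p) (pag p) PF RF) as [Z' [PZ [RZ AgZ]]].
      exists (Build_Pt F Z' PF PZ AgZ). split; [split; assumption|split; assumption].
  - apply sext; intro p. simpl. unfold fzero. split; [tauto|]. apply (pf0 _ _ (ppx p)).
  - apply sext; intro p. simpl. unfold fone. split; [intros _; apply (pf1 _ _ (ppx p))|tauto].
Qed.

Lemma truth2 t : (forall y, occurs y t -> Var (setU Gam (set1 eps)) y) -> eval PA w t = fun p => pz p (eval A v t).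
Proof.
  induction t; intro Ht; simpl.
  - apply sext; intro p. unfold w. destruct (classic (Var Sig y)) as [Vy|nVy].
    + assert (Hy : y0t Y Y0 (tvar y)).
      { intros y' Hy'. simpl in Hy'. subst. split; [exact Vy|apply Ht; reflexivity]. }
      pose proof (pag p (tvar y) Hy) as Ag. simpl in Ag. tauto.
    + tauto.
  - rewrite IHt1, IHt2 by (intros y Hy; apply Ht; simpl; auto).
    apply sext; intro p. simpl. unfold fmeet. symmetry. apply (pf_meet A _ _ _ (ppz p)).
  - rewrite IHt1, IHt2 by (intros y Hy; apply Ht; simpl; auto).
    apply sext; intro p. simpl. unfold fjoin. symmetry. apply (pf_join A _ _ _ (ppz p)).
  - rewrite IHt1, IHt2 by (intros y Hy; apply Ht; simpl; auto).
    apply sext; intro p. simpl. unfold fimp. split.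
    + intro H. apply NNPP; intro n.
      destruct (imp_truth A (pz p) _ _ (ppz p) n) as [G [PG [RG [Ga nGb]]]].
      destruct (tr_fwd Y Y0 A LL v vLL (pz p) (px p) G (ppz p) (ppx p) (agree_sym _ _ _ _ _ _ _ _ (pag p)) PG RG) as [X' [PX [RX AgX]]].
      apply nGb. apply (H (Build_Pt X' G PX PG (agree_sym _ _ _ _ _ _ _ _ AgX))); [split; assumption|exact Ga].
    + intros H q [R1 R2] Ha. exact (R2 _ _ H Ha).
  - rewrite IHt1, IHt2 by (intros y Hy; apply Ht; simpl; auto).
    apply sext; intro p. simpl. unfold fcoimp. split.
    + intros [q [[R1 R2] [Ha nb]]]. apply (R_S A (pz q) (pz p) (ppz q) (ppz p) R2); auto.
    + intro H. destruct (coimp_truth A (pz p) _ _ (ppz p) H) as [F [PF [RF [Fa nFb]]]].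
      destruct (tr_bwd Y Y0 A LL v vLL (pz p) (px p) F (ppz p) (ppx p) (agree_sym _ _ _ _ _ _ _ _ (pag p)) PF RF) as [X' [PX [RX AgX]]].
      exists (Build_Pt X' F PX PF (agree_sym _ _ _ _ _ _ _ _ AgX)). split; [split; assumption|split; assumption].
  - apply sext; intro p. simpl. unfold fzero. split; [tauto|]. apply (pf0 _ _ (ppz p)).
  - apply sext; intro p. simpl. unfold fone. split; [intros _; apply (pf1 _ _ (ppz p))|tauto].
Qed.

Lemma lemD Z : pf (toDL A) Z -> exists X, pf (toDL LL) X /\ agree Y Y0 LL vLL A v X Z.
Proof.
  intro PZ.
  destruct (pft LL (fun z => exists t, y0t Y Y0 t /\ Z (eval A v t) /\ le (toDL LL) (eval LL vLL t) z)
                   (fun z => exists s, y0t Y Y0 s /\ ~ Z (eval A v s) /\ le (toDL LL) z (eval LL vLL s)))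
    as [X [PX [H1 H2]]].
  - exists (one LL). exists tone. split; [apply y0_one|split; [apply (pf1 _ _ PZ)|apply (le_refl (toDL LL))]].
  - intros x y [t [Ht [Zt Hx]]] [t' [Ht' [Zt' Hy]]]. exists (tmeet t t').
    split; [apply y0_meet; auto|split].
    + simpl. apply (pfm _ _ PZ); auto.
    + simpl. apply (le_mono_m (toDL LL)); auto.
  - intros x y [t [Ht [Zt Hx]]] Hxy. exists t. split; [exact Ht|split; [exact Zt|]]. eapply (le_trans (toDL LL)); eauto.
  - exists (zero LL). exists tzero. split; [apply y0_zero|split; [apply (pf0 _ _ PZ)|apply (le_refl (toDL LL))]].
  - intros x y Hxy [s [Hs [Zs Hy]]]. exists s. split; [exact Hs|split; [exact Zs|]]. eapply (le_trans (toDL LL)); eauto.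
  - intros x y [s [Hs [Zs Hx]]] [s' [Hs' [Zs' Hy]]]. exists (tjoin s s').
    split; [apply y0_join; auto|split].
    + simpl. intro Hj. apply (pfj _ _ PZ) in Hj. tauto.
    + simpl. apply (le_mono_j (toDL LL)); auto.
  - intros x [t [Ht [Zt Hx]]] [s [Hs [Zs Hy]]].
    assert (Hts : le (toDL LL) (eval LL vLL t) (eval LL vLL s)) by (eapply (le_trans (toDL LL)); eauto).
    unfold le in Hts. simpl in Hts.
    change (eval LL vLL (tmeet t s) = eval LL vLL t) in Hts.
    rewrite !evalL in Hts. apply mkL_inv in Hts.
    apply HvD in Hts; [|apply y0_meet; auto|exact Ht].
    simpl in Hts. apply Zs. eapply (pfup _ _ PZ); [|exact Zt].
    exact Hts.
  - exists X. split; [exact PX|]. intros t Ht. split.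
    + intro Xt. apply NNPP. intro nZ. eapply H2; [exact Xt|]. exists t. split; [exact Ht|split; [exact nZ|apply (le_refl (toDL LL))]].
    + intro Zt. apply H1. exists t. split; [exact Ht|split; [exact Zt|apply (le_refl (toDL LL))]].
Qed.

Lemma main_sat : sat A v eps.
Proof.
  unfold sat. apply NNPP. intro Hne.
  set (a := eval A v (fst eps)) in *. set (b := eval A v (snd eps)) in *.
  assert (HZ : exists Z, pf (toDL A) Z /\ ~ (Z a <-> Z b)).
  { assert (H : ~ le (toDL A) a b \/ ~ le (toDL A) b a).
    { apply NNPP; intro H. apply Hne. apply (le_anti (toDL A)); apply NNPP; tauto. }
    destruct H as [H|H].
    - destruct (pft A (fun z => le (toDL A) a z) (fun z => le (toDL A) z b)) as [Z [PZ [H1 H2]]].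
      + exists a; apply (le_refl (toDL A)).
      + intros; apply (le_glb (toDL A)); auto.
      + intros; eapply (le_trans (toDL A)); eauto.
      + exists b; apply (le_refl (toDL A)).
      + intros; eapply (le_trans (toDL A)); eauto.
      + intros; apply (le_lub (toDL A)); auto.
      + intros x H1' H2'. apply H. eapply (le_trans (toDL A)); eauto.
      + exists Z. split; [exact PZ|]. intro E. apply (H2 b); [apply E, H1, (le_refl (toDL A))|apply (le_refl (toDL A))].
    - destruct (pft A (fun z => le (toDL A) b z) (fun z => le (toDL A) z a)) as [Z [PZ [H1 H2]]].
      + exists b; apply (le_refl (toDL A)).
      + intros; apply (le_glb (toDL A)); auto.
      + intros; eapply (le_trans (toDL A)); eauto.
      + exists a; apply (le_refl (toDL A)).
      + intros; eapply (le_trans (toDL A)); eauto.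
      + intros; apply (le_lub (toDL A)); auto.
      + intros x H1' H2'. apply H. eapply (le_trans (toDL A)); eauto.
      + exists Z. split; [exact PZ|]. intro E. apply (H2 a); [apply E, H1, (le_refl (toDL A))|apply (le_refl (toDL A))]. }
  destruct HZ as [Z [PZ nE]].
  destruct (lemD Z PZ) as [X [PX AgX]].
  set (p0 := Build_Pt X Z PX PZ AgX).
  assert (Hmod : forall e, setU Sig Gam e -> sat PA w e).
  { intros e [He|He]; unfold sat.
    - rewrite (truth1 (fst e)), (truth1 (snd e)).
      + rewrite !evalL. rewrite (mkL_eq Y Sig (fst e) (snd e)); [reflexivity|].
        intros B u Hu. apply Hu. exact He.
      + intros y Hy. exists e. auto.
      + intros y Hy. exists e. auto.
    - rewrite (truth2 (fst e)), (truth2 (snd e)).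
      + rewrite (HvG e He). reflexivity.
      + intros y Hy. exists e. split; [left; exact He|auto].
      + intros y Hy. exists e. split; [left; exact He|auto]. }
  pose proof (Hent PA w Hmod eps eq_refl) as Heps. unfold sat in Heps.
  rewrite (truth2 (fst eps)), (truth2 (snd eps)) in Heps.
  - apply nE. pose proof (equal_f Heps p0) as E. simpl in E. fold a b in E. rewrite E. tauto.
  - intros y Hy. exists eps. split; [right; reflexivity|auto].
  - intros y Hy. exists eps. split; [right; reflexivity|auto].
Qed.
End Main.

Theorem corollary6p29 :
  forall (Y : Type) (Sigma Gamma : eqn Y -> Prop) (eps : eqn Y),
    (exists y, Var Sigma y /\ Var (setU Gamma (set1 eps)) y) ->
    entails (setU Sigma Gamma) (set1 eps) ->
    exists Delta : eqn Y -> Prop,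
      entails Sigma Delta /\
      entails (setU Delta Gamma) (set1 eps) /\
      (forall y, Var Delta y -> Var Sigma y /\ Var (setU Gamma (set1 eps)) y).
Proof.
  intros Y Sig Gam eps _ Hent.
  exists (fun e => y0t Y (Y0 Y Sig Gam eps) (fst e) /\ y0t Y (Y0 Y Sig Gam eps) (snd e) /\ eqv Y Sig (fst e) (snd e)).
  split; [|split].
  - intros A v Hv e [_ [_ He]]. exact (He A v Hv).
  - intros A v Hv e He. unfold set1 in He. subst e.
    apply (main_sat Y Sig Gam eps A v).
    + intros t s Ht Hs Hts. apply (Hv (t, s)). left. simpl. auto.
    + intros e He. apply Hv. right. exact He.
    + exact Hent.
  - intros y [e [[H1 [H2 _]] [Ho|Ho]]]; [apply H1|apply H2]; exact Ho.
Qed.
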